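(* Let $A=\{a_s(n_s)\}_{s=1}^k$ and $B=\{b_t(m_t)\}_{t=1}^l$ be finite systems of residue classes with positive integer moduli and integers $0\leqslant a_s<n_s$, $0\leqslant b_t<m_t$, such that $n_1,\ldots,n_k$ are pairwise distinct and $m_1,\ldots,m_l$ are pairwise distinct. Let $p$ be a prime with $p>|S(n_1,\ldots,n_k,m_1,\ldots,m_l)|$ and let $\zeta_p$ be a primitive $p$th root of unity. Then $A$ and $B$ are identical (i.e., $k=l$ and $\{(a_s,n_s)\}_{s=1}^k=\{(b_t,m_t)\}_{t=1}^l$) if and only if $$\sum_{s=1}^k\frac{\zeta_p^{a_s}}{1-\zeta_p^{n_s}}=\sum_{t=1}^l\frac{\zeta_p^{b_t}}{1-\zeta_p^{m_t}}.$$
   Context: For a positive integer $n$ and $a\in\{0,\ldots,n-1\}$, $a(n)$ denotes the residue class $\{x\in\mathbb Z: x\equiv a \pmod n\}$. For positive integers $n_1,\ldots,n_k$, $S(n_1,\ldots,n_k)=\{r/n_s: r=0,\ldots,n_s-1;\ s=1,\ldots,k\}$, a set of rational numbers, and $|S(\cdot)|$ denotes its cardinality. *)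

(* Defs.v *)
From mathcomp Require Import all_boot all_order all_algebra all_field.
Set Implicit Arguments. Unset Strict Implicit. Unset Printing Implicit Defensive.

Definition Sset (ns : seq nat) : seq rat :=
  undup [seq ((r%:R : rat) / (n%:R : rat))%R | n <- ns, r <- iota 0 n].

Definition Scard (ns : seq nat) : nat := size (Sset ns).

(* Main.v *)
Require Import Defs.
From mathcomp Require Import all_boot all_order all_algebra all_field.
From mathcomp Require Import algC.
From mathcomp Require Import cyclotomic zify ring.
Import GRing.Theory Num.Theory.

Definition Dset (ns : seq nat) : seq nat := undup (flatten [seq divisors n | n <- ns]).
Lemma totient_size d : size [seq r <- iota 0 d | coprime d r] = totient d.
Proof.
rewrite size_filter totient_count_coprime -sum1_count big_mkcond /index_iota subn0.
by apply: eq_bigr => i _; case: coprime.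
Qed.
Lemma frac_inj (r d r' d' : nat) : (0 < d)%N -> (0 < d')%N -> coprime d r -> coprime d' r' ->
  ((r%:R : rat) / d%:R = r'%:R / d'%:R)%R -> d = d' /\ r = r'.
Proof.
move=> d0 d'0 c c' E.
have Hd : denq ((Posz r)%:~R / (Posz d)%:~R : rat) = Posz d.
  rewrite coprimeq_den; last by rewrite coprime_sym.
  by case: (d) d0.
have Hd' : denq ((Posz r')%:~R / (Posz d')%:~R : rat) = Posz d'.
  rewrite coprimeq_den; last by rewrite coprime_sym.
  by case: (d') d'0.
have edd : d = d'.
  move: Hd Hd'; rewrite -!pmulrn E => -> [] //.
split=> //; subst d'.
have dn0 : ((d%:R : rat) != 0)%R by rewrite pnatr_eq0 -lt0n.
have : ((r%:R : rat) = r'%:R)%R.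
  by move: E => /(congr1 (fun x => x * d%:R)%R); rewrite !mulfVK.
by move/eqP; rewrite eqr_nat => /eqP.
Qed.

Lemma memD ns d : reflect (exists2 n, n \in ns & d \in divisors n) (d \in Dset ns).
Proof. by rewrite mem_undup; apply: flatten_mapP. Qed.

Lemma Sbound ns : (forall n, n \in ns -> 0 < n) ->
  \sum_(d <- Dset ns) totient d <= Scard ns.
Proof.
move=> hpos.
have Dpos d : d \in Dset ns -> 0 < d.
  by case/memD=> n /hpos n0; rewrite -dvdn_divisors //; apply: dvdn_gt0.
pose L := [seq ((r%:R : rat) / d%:R)%R | d <- Dset ns, r <- [seq r <- iota 0 d | coprime d r]].
have -> : \sum_(d <- Dset ns) totient d = size L.
  by rewrite size_allpairs_dep (eq_map totient_size) sumnE big_map.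
apply: uniq_leq_size.
  apply: allpairs_uniq_dep; first exact: undup_uniq.
    by move=> d _; rewrite filter_uniq // iota_uniq.
  move=> u v /allpairsPdep[d [r [hd hr ->]]] /allpairsPdep[d' [r' [hd' hr' ->]]] /=.
  move: hr hr'; rewrite !mem_filter => /andP[c _] /andP[c' _] E.
  by have [e1 e2] := frac_inj r d r' d' (Dpos _ hd) (Dpos _ hd') c c' E; subst.
move=> x /allpairsPdep[d [r [hd hr ->]]].
move: hr; rewrite mem_filter mem_iota add0n => /andP[_ rd].
case/memD: hd => n hn; rewrite -dvdn_divisors ?hpos // => dn.
rewrite /Sset mem_undup.
have d0 : 0 < d by apply: dvdn_gt0 dn; apply: hpos.
have q0 : 0 < n %/ d by rewrite divn_gt0 // dvdn_leq ?hpos.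
have -> : ((r%:R : rat) / d%:R = (r * (n %/ d))%:R / n%:R)%R.
  rewrite -{2}(divnK dn) !natrM.
  have h1 : (((n %/ d)%:R : rat) != 0)%R by rewrite pnatr_eq0 -lt0n.
  have h2 : ((d%:R : rat) != 0)%R by rewrite pnatr_eq0 -lt0n.
  by rewrite [(_ * d%:R)%R]mulrC -mulf_div divff // mulr1.
have hr : r * (n %/ d) \in iota 0 n.
  rewrite mem_iota add0n.
  have := rd; rewrite -(ltn_pmul2r q0) [d * _]mulnC divnK //.
exact: (@allpairs_f_dep _ (fun _ => nat) _ (fun n r => (r%:R : rat) / n%:R)%R _ (fun n => iota 0 n) _ _ hn hr).
Qed.

Definition Qp (D : seq nat) : {poly int} := \prod_(d <- D) 'Phi_d.
Definition Q2 (D : seq nat) n : {poly int} := \prod_(d <- D | ~~ (d %| n)) 'Phi_d.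
Definition Tp (D : seq nat) (x : nat * nat) : {poly int} := ('X^(x.1) * Q2 D x.2)%R.
Definition PA (D : seq nat) (s : seq (nat * nat)) : {poly int} := (\sum_(x <- s) Tp D x)%R.
Notation CZ := (map_poly (intr : int -> algC)).

Lemma Qsplit D n : uniq D -> 0 < n -> (forall d, d %| n -> d \in D) ->
  Qp D = (('X^n - 1) * Q2 D n)%R.
Proof.
move=> uD n0 hD; rewrite /Qp (bigID (fun d => d %| n)) /= -big_filter.
rewrite -(prod_Cyclotomic n0); congr (_ * _)%R.
apply: perm_big; apply: uniq_perm; [exact: filter_uniq | exact: divisors_uniq |].
move=> d; rewrite mem_filter -dvdn_divisors //.
by apply/andP/idP=> [[]//|h]; split=> //; apply: hD.
Qed.

Lemma sizeQ D : size (Qp D) = (\sum_(d <- D) totient d).+1.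
Proof.
rewrite /Qp; elim: D => [|d D IH]; first by rewrite !big_nil size_poly1.
rewrite !big_cons size_Mmonic ?monic_neq0 ?Cyclotomic_monic //; last first.
  by apply: monic_prod => i _; apply: Cyclotomic_monic.
by rewrite IH size_Cyclotomic addSn addnS.
Qed.

Lemma Q2_monic D n : Q2 D n \is monic.
Proof. by apply: monic_prod => i _; apply: Cyclotomic_monic. Qed.

Lemma sizeT D x : uniq D -> 0 < x.2 -> x.1 < x.2 -> (forall d, d %| x.2 -> d \in D) ->
  size (Tp D x) < size (Qp D).
Proof.
move=> uD; case: x => a n; rewrite /= => n0 an hD.
rewrite (Qsplit D n uD n0 hD) /Tp /=.
have Xn0 : (('X^n - 1 : {poly int}) != 0)%R.
  by rewrite -size_poly_eq0 size_XnsubC // -lt0n.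
rewrite !size_Mmonic ?Q2_monic ?monic_neq0 ?monicXn ?monicXnsubC //.
have : 0 < size (Q2 D n) by rewrite lt0n size_poly_eq0 monic_neq0 ?Q2_monic.
rewrite size_polyXn size_XnsubC //; lia.
Qed.

Lemma sizePA D s : uniq D ->
  (forall x, x \in s -> [/\ 0 < x.2, x.1 < x.2 & forall d, d %| x.2 -> d \in D]) ->
  size (PA D s) < size (Qp D).
Proof.
move=> uD hs; rewrite /PA big_seq.
apply: (big_ind (fun p : {poly int} => size p < size (Qp D))).
- by rewrite size_poly0 sizeQ.
- move=> p q hp hq; apply: leq_ltn_trans (size_add _ _) _.
  by rewrite gtn_max hp hq.
- by move=> x /hs [h1 h2 h3]; apply: sizeT.
Qed.

Lemma evalT (z : algC) D x : uniq D -> 0 < x.2 -> (forall d, d %| x.2 -> d \in D) ->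
  (z ^+ x.2 != 1)%R ->
  ((CZ (Tp D x)).[z] = - (CZ (Qp D)).[z] * (z ^+ x.1 / (1 - z ^+ x.2)))%R.
Proof.
case: x => a n /= uD n0 hD zn.
rewrite (Qsplit D n uD n0 hD) /Tp /= !rmorphM /= !hornerM rmorphB /= rmorph1.
have h : (1 - z ^+ n != 0)%R by rewrite subr_eq0 eq_sym.
rewrite !map_polyXn ?hornerD ?hornerN ?horner1 ?hornerC !hornerXn.
move: (horner _ _) => q.
field; exact: h.
Qed.

Lemma small_zero p (z : algC) (q : {poly int}) : prime p -> (p.-primitive_root z)%R ->
  size q < p -> ((CZ q).[z] = 0)%R -> q = 0%R.
Proof.
move=> pp pz sq qz; apply/eqP; apply: contraT => q0.
have [pf [Dpf _] dv] := minCpolyP z.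
have : (pf %| map_poly (intr : int -> rat) q)%R.
  rewrite -dv -map_poly_comp.
  have -> : map_poly (ratr \o (intr : int -> rat)) q = CZ q.
    by apply: eq_map_poly => b /=; rewrite rmorph_int.
  by rewrite /root qz.
move/dvdp_leq => h.
have H : size (map_poly (intr : int -> rat) q) = size q.
  by apply: size_map_inj_poly; [exact: intr_inj | exact: rmorph0].
have : size pf <= size q by rewrite -H; apply: h; rewrite -size_poly_eq0 H size_poly_eq0.
have -> : size pf = p.
  have H2 : size (map_poly (ratr : rat -> algC) pf) = size pf.
    by apply: size_map_inj_poly; [exact: fmorph_inj | exact: rmorph0].
  by rewrite -H2 -Dpf (minCpoly_cyclotomic pz) size_cyclotomic totient_prime // prednK ?prime_gt0.
by move=> h2; move: (leq_ltn_trans h2 sq); rewrite ltnn.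
Qed.

Lemma phi_root (w : algC) d : 0 < d -> ((CZ 'Phi_d).[w] == 0)%R = (d.-primitive_root w)%R.
Proof.
move=> d0; have [w0 pw0] := C_prim_root_exists d0.
by rewrite (Cintr_Cyclotomic pw0) -[(_ == 0)%R]/(root _ w) root_cyclotomic.
Qed.

Lemma prim_eq (w : algC) d M : (d.-primitive_root w)%R -> (M.-primitive_root w)%R -> d = M.
Proof.
move=> pd pM; apply/eqP; rewrite eqn_dvd (prim_order_dvd pd) (prim_expr_order pM) eqxx /=.
by rewrite (prim_order_dvd pM) (prim_expr_order pd) eqxx.
Qed.
Arguments prim_eq {w d M}.

Definition good (D : seq nat) (x : nat * nat) :=
  [/\ 0 < x.2, x.1 < x.2 & forall d, d %| x.2 -> d \in D].

Lemma Q2_eval_neq0 (w : algC) D M : (M.-primitive_root w)%R -> (forall d, d \in D -> 0 < d) ->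
  ((CZ (Q2 D M)).[w] != 0)%R.
Proof.
move=> pM Dpos; rewrite /Q2 rmorph_prod horner_prod prodf_seq_neq0.
apply/allP => d dD; apply/implyP => ndM.
rewrite phi_root ?Dpos //; apply/negP => pd.
by move: ndM; rewrite (prim_eq pd pM) dvdnn.
Qed.

Lemma evalTw (w : algC) D M x : (M.-primitive_root w)%R -> (forall d, d \in D -> 0 < d) ->
  M \in D -> 0 < x.2 -> x.2 <= M ->
  ((CZ (Tp D x)).[w] = if x.2 == M then w ^+ x.1 * (CZ (Q2 D M)).[w] else 0)%R.
Proof.
move=> pM Dpos MD x0 xM; rewrite /Tp !rmorphM /= !hornerM !map_polyXn hornerXn.
case: eqP => [-> //| ne].
suff -> : ((CZ (Q2 D x.2)).[w] = 0)%R by rewrite mulr0.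
apply/eqP; rewrite /Q2 rmorph_prod horner_prod prodf_seq_eq0.
apply/hasP; exists M => //; apply/andP; split.
  apply/negP => Mx; apply: ne; apply/eqP; rewrite eqn_leq xM dvdn_leq //.
by rewrite phi_root ?Dpos.
Qed.

Lemma snd_inj (s : seq (nat * nat)) x y : uniq (map snd s) -> x \in s -> y \in s -> x.2 = y.2 -> x = y.
Proof.
elim: s => //= u s IH /andP[nu us]; rewrite !inE => /predU1P[->|xs] /predU1P[->|ys] e //.
- by move: nu; rewrite e map_f.
- by move: nu; rewrite -e map_f.
- exact: IH.
Qed.

Lemma has_max (s : seq (nat * nat)) : s != [::] ->
  exists2 y, y \in s & forall x, x \in s -> x.2 <= y.2.
Proof.
elim: s => // u s IH _; case: (s =P [::]) => [-> | /eqP ne].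
  by exists u; rewrite ?inE // => x; rewrite inE => /eqP ->.
have [y ys hy] := IH ne; case: (leqP u.2 y.2) => uy.
  by exists y; rewrite ?inE ?ys ?orbT // => x; rewrite inE => /predU1P[->|/hy].
exists u; rewrite ?inE ?eqxx // => x; rewrite inE => /predU1P[->//|/hy h].
by apply: leq_trans h (ltnW uy).
Qed.

Lemma sumg_in (w c : algC) M (s : seq (nat * nat)) xa : uniq (map snd s) -> xa \in s -> xa.2 = M ->
  (\sum_(x <- s) (if x.2 == M then w ^+ x.1 * c else 0) = w ^+ xa.1 * c)%R.
Proof.
move=> us xas xaM; rewrite (perm_big _ (perm_to_rem xas)) big_cons /= xaM eqxx.
rewrite big1_seq ?addr0 // => y /andP[_ yr].
have us' : uniq s by move: us; apply: map_uniq.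
case: eqP => // yM.
have yxa : y = xa by apply: snd_inj us (mem_rem yr) xas _; rewrite yM xaM.
by move: yr; rewrite mem_rem_uniq // inE yxa eqxx.
Qed.

Lemma sumg_out (w c : algC) M (s : seq (nat * nat)) : ~~ has (fun x => x.2 == M) s ->
  (\sum_(x <- s) (if x.2 == M then w ^+ x.1 * c else 0) = 0)%R.
Proof.
move/hasPn=> h; rewrite big1_seq // => y /andP[_ ys].
by rewrite (negbTE (h y ys)).
Qed.

Lemma PA_eval (w : algC) D M (s : seq (nat * nat)) : (M.-primitive_root w)%R ->
  (forall d, d \in D -> 0 < d) -> M \in D ->
  (forall x, x \in s -> 0 < x.2 /\ x.2 <= M) ->
  ((CZ (PA D s)).[w] = \sum_(x <- s) (if x.2 == M then w ^+ x.1 * (CZ (Q2 D M)).[w] else 0))%R.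
Proof.
move=> pM Dpos MD hs; rewrite /PA rmorph_sum horner_sum.
by apply: eq_big_seq => x /hs [h1 h2]; apply: evalTw.
Qed.

Lemma PA_rem D (s : seq (nat * nat)) x : x \in s -> PA D s = (Tp D x + PA D (rem x s))%R.
Proof. by move=> xs; rewrite /PA (perm_big _ (perm_to_rem xs)) big_cons. Qed.

Lemma uniq_rem_snd (s : seq (nat * nat)) x : uniq (map snd s) -> uniq (map snd (rem x s)).
Proof. by apply: subseq_uniq; apply: map_subseq; apply: rem_subseq. Qed.

Arguments has_max {s}.
Arguments PA_eval {w D M s}.
Arguments Q2_eval_neq0 {w D M}.
Arguments sumg_in {w c M s xa}.
Arguments sumg_out {w c M s}.
Arguments PA_rem {D s x}.

Lemma sep D : uniq D -> (forall d, d \in D -> 0 < d) -> forall sA sB : seq (nat * nat),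
  (forall x, x \in sA ++ sB -> good D x) -> uniq (map snd sA) -> uniq (map snd sB) ->
  PA D sA = PA D sB -> sA =i sB.
Proof.
move=> uD Dpos sA sB; have [N] := ubnP (size sA + size sB).
elim: N sA sB => // N IH sA sB hsz hg uA uB E.
have [e0 | ne] := eqVneq (sA ++ sB) [::].
  by case: sA sB e0 {hsz hg uA uB E} => [|? ?] [|? ?].
have [y yin ymax] := has_max ne.
have [y0 y1 yD] := hg y yin.
set M := y.2 in y0 y1 yD ymax.
have MD : M \in D by apply: yD.
have [w pw] := C_prim_root_exists y0.
set c := ((CZ (Q2 D M)).[w])%R.
have c0 : (c != 0)%R by apply: Q2_eval_neq0.
have w0 : (w != 0)%R.
  apply/eqP => w0; have := prim_expr_order pw; rewrite w0 expr0n.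
  by case: (M) y0 => // ? _ /eqP; rewrite eq_sym oner_eq0.
have hs (s : seq (nat * nat)) : {subset s <= sA ++ sB} -> forall x, x \in s -> 0 < x.2 /\ x.2 <= M.
  by move=> sub x /sub xs; have [? ? ?] := hg x xs; split=> //; apply: ymax.
have subA : {subset sA <= sA ++ sB} by move=> x h; rewrite mem_cat h.
have subB : {subset sB <= sA ++ sB} by move=> x h; rewrite mem_cat h orbT.
have EA := PA_eval pw Dpos MD (hs sA subA).
have EB := PA_eval pw Dpos MD (hs sB subB).
have E2 := congr1 (fun q => (CZ q).[w])%R E; rewrite /= EA EB -/c in E2.
have hyM : has (fun x => x.2 == M) (sA ++ sB) by apply/hasP; exists y.
case hA: (has (fun x => x.2 == M) sA); case hB: (has (fun x => x.2 == M) sB).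
- have [xa xaA /eqP xaM] := hasP hA; have [xb xbB /eqP xbM] := hasP hB.
  rewrite (sumg_in uA xaA xaM) (sumg_in uB xbB xbM) in E2.
  have /eqP := mulIf c0 E2; rewrite (eq_prim_root_expr pw).
  have [_ a1 _] := hg xa (subA _ xaA); have [_ b1 _] := hg xb (subB _ xbB).
  have a1' : xa.1 < M by rewrite -xaM.
  have b1' : xb.1 < M by rewrite -xbM.
  rewrite !modn_small // => /eqP e1.
  have exy : xa = xb by case: xa xb e1 xaM xbM {xaA xbB a1 b1 a1' b1' E2} => ? ? [? ?] /= -> -> ->.
  subst xb.
  have E' : PA D (rem xa sA) = PA D (rem xa sB).
    by apply: (addrI (Tp D xa)); rewrite -!PA_rem.
  have IH' := IH (rem xa sA) (rem xa sB).
  have h1 : size (rem xa sA) + size (rem xa sB) < N.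
    have sA0 : 0 < size sA by case: (sA) xaA.
    have sB0 : 0 < size sB by case: (sB) xbB.
    rewrite !size_rem //.
    move: hsz sA0 sB0; case: (size sA) => // a; case: (size sB) => // b.
    by move=> h _ _ /=; rewrite -ltnS (leq_trans _ h) // addSn addnS ltnS leqnSn.
  have h2 : forall x, x \in rem xa sA ++ rem xa sB -> good D x.
    by move=> x; rewrite mem_cat => /orP[/mem_rem h|/mem_rem h]; apply: hg; rewrite mem_cat h ?orbT.
  have := IH' h1 h2 (uniq_rem_snd _ xa uA) (uniq_rem_snd _ xa uB) E' => er z.
  by rewrite (perm_mem (perm_to_rem xaA)) (perm_mem (perm_to_rem xbB)) !inE er.
- have [xa xaA /eqP xaM] := hasP hA.
  rewrite (sumg_in uA xaA xaM) sumg_out ?hB // in E2.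
  by move/eqP: E2; rewrite mulf_eq0 expf_eq0 (negbTE w0) (negbTE c0) andbF.
- have [xb xbB /eqP xbM] := hasP hB.
  rewrite (sumg_in uB xbB xbM) sumg_out ?hA // in E2.
  by move/eqP: E2; rewrite eq_sym mulf_eq0 expf_eq0 (negbTE w0) (negbTE c0) andbF.
- by move: hyM; rewrite has_cat hA hB.
Qed.


Lemma sizeQ_gt D x : uniq D -> good D x -> x.2 < size (Qp D).
Proof.
case: x => a n uD [/= n0 _ hD] /=.
rewrite (Qsplit D n uD n0 hD).
have Xn0 : (('X^n - 1 : {poly int}) != 0)%R.
  by rewrite -size_poly_eq0 size_XnsubC // -lt0n.
rewrite !size_Mmonic ?Q2_monic ?monic_neq0 ?monicXnsubC // size_XnsubC //.
have : 0 < size (Q2 D n) by rewrite lt0n size_poly_eq0 monic_neq0 ?Q2_monic.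
by rewrite addSn /=; case: (size _) => // q _; rewrite addnS ltnS leq_addr.
Qed.

Lemma PA_evalz (z : algC) D (s : seq (nat * nat)) : uniq D ->
  (forall x, x \in s -> good D x) -> (forall x, x \in s -> (z ^+ x.2 != 1)%R) ->
  ((CZ (PA D s)).[z] = - (CZ (Qp D)).[z] * \sum_(x <- s) (z ^+ x.1 / (1 - z ^+ x.2)))%R.
Proof.
move=> uD hg hz; rewrite /PA rmorph_sum horner_sum mulr_sumr.
apply: eq_big_seq => x xs; have [h1 _ h3] := hg x xs.
by apply: (evalT z D x uD h1 h3 (hz x xs)).
Qed.

Arguments sizeQ_gt {D x}.
Arguments PA_evalz {z D s}.
Arguments small_zero {p z q}.
Arguments sep {D}.
Arguments sizePA {D s}.

Theorem corollary1p3 (k l : nat) (a n : 'I_k -> nat) (b m : 'I_l -> nat)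
  (hn : forall s, 0 < n s) (ha : forall s, a s < n s) (hninj : injective n)
  (hm : forall t, 0 < m t) (hb : forall t, b t < m t) (hminj : injective m)
  (p : nat) (hp : prime p)
  (hpS : Scard ([seq n s | s : 'I_k] ++ [seq m t | t : 'I_l]) < p)
  (z : algC) (hz : (p.-primitive_root z)%R) :
  (k = l /\ [seq (a s, n s) | s : 'I_k] =i [seq (b t, m t) | t : 'I_l])
  <->
  (\sum_(s : 'I_k) z ^+ a s / (1 - z ^+ n s)
   = \sum_(t : 'I_l) z ^+ b t / (1 - z ^+ m t))%R.
Proof.
set sA := [seq (a s, n s) | s : 'I_k].
set sB := [seq (b t, m t) | t : 'I_l].
set ns := [seq n s | s : 'I_k] ++ [seq m t | t : 'I_l].
pose G := fun x : nat * nat => (z ^+ x.1 / (1 - z ^+ x.2))%R.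
have SA : (\sum_(s : 'I_k) z ^+ a s / (1 - z ^+ n s) = \sum_(x <- sA) G x)%R.
  by rewrite big_image.
have SB : (\sum_(t : 'I_l) z ^+ b t / (1 - z ^+ m t) = \sum_(x <- sB) G x)%R.
  by rewrite big_image.
rewrite SA SB.
have uA : uniq sA.
  rewrite /sA /image_mem map_inj_uniq ?enum_uniq // => s s' [_].
  exact: hninj.
have uB : uniq sB.
  rewrite /sB /image_mem map_inj_uniq ?enum_uniq // => s s' [_].
  exact: hminj.
split.
  by case=> _ eAB; apply: perm_big; apply: uniq_perm.
move=> Esum.
have nspos : forall x, x \in ns -> 0 < x.
  move=> x; rewrite mem_cat => /orP[] /imageP [s _ ->]; [exact: hn | exact: hm].
set D := Dset ns.
have uD : uniq D by apply: undup_uniq.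
have Dpos : forall d, d \in D -> 0 < d.
  by move=> d /memD [x /nspos x0]; rewrite -dvdn_divisors // => /dvdn_gt0; apply.
have hgood : forall x, x \in sA ++ sB -> good D x.
  move=> x; rewrite mem_cat => /orP[] /imageP [s _ ->]; split => //= d dv;
    apply/memD.
  - by exists (n s); [rewrite mem_cat image_f | rewrite -dvdn_divisors].
  - by exists (m s); [rewrite mem_cat image_f ?orbT | rewrite -dvdn_divisors].
have QP : size (Qp D) <= p.
  by rewrite sizeQ; apply: leq_ltn_trans (Sbound ns nspos) hpS.
have hzx : forall x, x \in sA ++ sB -> (z ^+ x.2 != 1)%R.
  move=> x xin; have gx := hgood x xin; have [x0 _ _] := gx.
  rewrite -(prim_order_dvd hz); apply/negP => /(dvdn_leq x0).
  by have := leq_trans (sizeQ_gt uD gx) QP; rewrite ltnNge => /negbTE ->.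
have subA : {subset sA <= sA ++ sB} by move=> x h; rewrite mem_cat h.
have subB : {subset sB <= sA ++ sB} by move=> x h; rewrite mem_cat h orbT.
have EA := PA_evalz uD (fun x h => hgood x (subA x h)) (fun x h => hzx x (subA x h)).
have EB := PA_evalz uD (fun x h => hgood x (subB x h)) (fun x h => hzx x (subB x h)).
have sPA : size (PA D sA) < size (Qp D).
  by apply: sizePA => // x h; exact: (hgood x (subA x h)).
have sPB : size (PA D sB) < size (Qp D).
  by apply: sizePA => // x h; exact: (hgood x (subB x h)).
have E0 : PA D sA = PA D sB.
  apply/eqP; rewrite -subr_eq0; apply/eqP.
  apply: (small_zero hp hz).
    apply: leq_trans QP; apply: leq_ltn_trans (size_add _ _) _.
    by rewrite size_opp gtn_max sPA sPB.
  by rewrite rmorphB /= hornerD hornerN EA EB Esum subrr.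
have uA' : uniq (map snd sA) by rewrite /sA /image_mem -map_comp map_inj_uniq ?enum_uniq.
have uB' : uniq (map snd sB) by rewrite /sB /image_mem -map_comp map_inj_uniq ?enum_uniq.
have eAB := sep uD Dpos sA sB hgood uA' uB' E0.
split=> //.
have := perm_size (uniq_perm uA uB eAB).
by rewrite /sA /sB !size_image !card_ord.
Qed.
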